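(* For every integer $N\ge1$, $$\phi_N(y,z)=\{(q-1)z\}^{-N(N+1)/2}q^{-(N-1)N(N+1)/6}\det\Big(p_{2(N+1-i)}\big(y,q^{N+1-j}z\big)\Big)_{i,j=1}^{N+1},$$ i.e. the $(N+1)\times(N+1)$ determinant has first row $p_{2N}(y,q^Nz),p_{2N}(y,q^{N-1}z),\dots,p_{2N}(y,z)$ and last row $p_0(y,q^Nz),\dots,p_0(y,z)$.
   Context: $q$ is a fixed nonzero complex constant that is not a root of unity; $y,z$ are variables. For $k\in\mathbb{Z}$ the polynomials $p_k(y,z)$ are defined by the generating function $\sum_{n\ge 0}p_n(y,z)t^n=\frac{(-(1-q)t;q)_\infty}{((1-q)yt;q)_\infty((1-q)zt;q)_\infty}$, with $(a;q)_\infty=\prod_{i\ge0}(1-aq^i)$, and $p_k=0$ for $k<0$; equivalently $p_n(y,z)=(1-q)^n\sum_{a+b+c=n}\frac{y^a z^b q^{c(c-1)/2}}{(q;q)_a(q;q)_b(q;q)_c}$ with $(q;q)_m=\prod_{j=1}^m(1-q^j)$. For $N>0$, $\phi_N(y,z)=\det\big(p_{N-2i+j+1}(y,z)\big)_{i,j=1}^N$. *)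

(* Defs.v *)
From HB Require Import structures.
From mathcomp Require Import all_boot all_order all_algebra.
From mathcomp Require Import complex Rstruct.

Set Implicit Arguments. Unset Strict Implicit. Unset Printing Implicit Defensive.
Import Order.TTheory GRing.Theory Num.Theory.
Local Open Scope ring_scope.

Definition C : Type := (complex Rdefinitions.R).

Definition qpoch (q : C) (m : nat) : C := \prod_(1 <= j < m.+1) (1 - q ^+ j).

Definition qp_nat (q : C) (n : nat) (y z : C) : C :=
  (1 - q) ^+ n *
  \sum_(a < n.+1) \sum_(b < n.+1 | ((a : nat) + (b : nat) <= n)%N)
     (y ^+ a * z ^+ b * q ^+ 'C(n - a - b, 2)
       / (qpoch q a * qpoch q b * qpoch q (n - a - b))).

Definition p (q : C) (k : int) (y z : C) : C :=
  match k with
  | Posz n => qp_nat q n y z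
  | Negz _ => 0
  end.

(* phi_N(y,z) = det (p_{N-2i+j+1}(y,z))_{i,j=1}^N ; with 0-based i,j : 'I_N
   the index is N - 2(i+1) + (j+1) + 1 = N - 2i + j. *)
Definition phi (q : C) (N : nat) (y z : C) : C :=
  \det (\matrix_(i < N, j < N) p q (N%:Z - 2 * (i : nat)%:Z + (j : nat)%:Z) y z).

Definition not_root_of_unity (q : C) : Prop := forall n : nat, (0 < n)%N -> q ^+ n != 1.

(* Main.v *)
Require Import Defs.
From HB Require Import structures.
From mathcomp Require Import all_boot all_order all_algebra.
From mathcomp Require Import complex Rstruct.
From mathcomp Require Import ring zify.
Import Order.TTheory GRing.Theory Num.Theory.
Local Open Scope ring_scope.
Section Rec.
Variable q : C.
Hypothesis hq : not_root_of_unity q.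

Definition hh (w : C) (k : nat) : C := (1 - q) ^+ k * w ^+ k / qpoch q k.
Definition gg (c : nat) : C := (1 - q) ^+ c * q ^+ 'C(c, 2) / qpoch q c.
Definition ss (m : nat) (w : C) : C := \sum_(b < m.+1) hh w b * gg (m - b).

Lemma qpochS k : qpoch q k.+1 = qpoch q k * (1 - q ^+ k.+1).
Proof. by rewrite /qpoch big_nat_recr. Qed.

Lemma qpoch_neq0 k : qpoch q k != 0.
Proof.
rewrite /qpoch prodf_seq_neq0; apply/allP => j; rewrite mem_index_iota => /andP [hj _] /=.
by rewrite subr_eq0 eq_sym; apply: hq.
Qed.

Lemma qp_nat_dec n y z : qp_nat q n y z = \sum_(a < n.+1) hh y a * ss (n - a) z.
Proof.
rewrite /qp_nat big_distrr; apply: eq_bigr => a _ /=.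
rewrite /ss big_distrr big_distrr /=.
have ha : (a <= n)%N by have := ltn_ord a; lia.
rewrite (big_ord_widen n.+1 (fun b : nat => hh y a * (hh z b * gg (n - a - b)))); last by lia.
apply: eq_big => [b|b hb]; first by apply/idP/idP => ?; lia.
have -> : (1 - q) ^+ n = (1 - q) ^+ a * (1 - q) ^+ b * (1 - q) ^+ (n - a - b).
  by rewrite -!exprD; congr (_ ^+ _); lia.
rewrite /hh /gg !invfM; ring.
Qed.

Lemma hh0 w : hh w 0 = 1.
Proof. rewrite /hh /qpoch big_geq // !expr0 mulr1 invr1 mulr1. reflexivity. Qed.

Lemma hh_rec w k : hh (q * w) k.+1 = hh w k.+1 - (1 - q) * w * hh w k.
Proof.
rewrite /hh qpochS.
have h1 : 1 - q ^+ k.+1 != 0 by rewrite subr_eq0 eq_sym; apply: hq.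
have h2 := qpoch_neq0 k.
move: h1 h2; set P := qpoch q k; rewrite exprMn; set Q := q ^+ k.+1; rewrite !exprS.
move=> h1 h2.
field; by apply/andP.
Qed.

Lemma ss_rec m w : ss m.+1 (q * w) = ss m.+1 w + (q - 1) * w * ss m w.
Proof.
rewrite /ss big_ord_recl [X in _ = X + _]big_ord_recl !hh0 !subn0.
under eq_bigr => b _ do rewrite lift0 subSS hh_rec.
under [in X in _ = X + _]eq_bigr => b _ do rewrite lift0 subSS.
rewrite -addrA; congr (_ + _).
rewrite big_distrr /= -big_split /=; apply: eq_bigr => b _.
ring.
Qed.

Lemma ss0 w w' : ss 0 w = ss 0 w'.
Proof. by rewrite /ss !big_ord1 !hh0. Qed.

Lemma qp_rec n y w : qp_nat q n.+1 y (q * w) = qp_nat q n.+1 y w + (q - 1) * w * qp_nat q n y w.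
Proof.
rewrite !qp_nat_dec big_ord_recr [in X in _ = X + _]big_ord_recr /= subnn (ss0 (q * w) w).
rewrite addrAC; congr (_ + _).
rewrite big_distrr -big_split /=; apply: eq_bigr => a _ /=.
have ha := ltn_ord a.
have -> : (n.+1 - a = (n - a).+1)%N by lia.
rewrite ss_rec; ring.
Qed.

Lemma qp_nat0 y w : qp_nat q 0 y w = 1.
Proof.
rewrite /qp_nat big_ord1 big_mkcond big_ord1 /= expr0 mul1r !expr0 /qpoch big_geq //.
by rewrite !mul1r invr1.
Qed.

Lemma p_rec (k : int) y w : p q k y (q * w) = p q k y w + (q - 1) * w * p q (k - 1) y w.
Proof.
case: k => [[|n]|n].
- by rewrite /= !qp_nat0 mulr0 addr0.
- have -> : (n.+1%:Z - 1 = n%:Z)%R by lia.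
  by rewrite /= qp_rec.
- have -> : (Negz n - 1 = Negz n.+1)%R by rewrite !NegzE; lia.
  by rewrite /= mulr0 addr0.
Qed.


Fixpoint u (m k : nat) : C :=
  match m with
  | 0 => (k == 0%N)%:R
  | m'.+1 => (if k is k'.+1 then u m' k' else 0) - q ^+ m' * u m' k
  end.

Lemma uS m k : u m.+1 k = (if k is k'.+1 then u m k' else 0) - q ^+ m * u m k.
Proof. by []. Qed.

Lemma u_gt m k : (m < k)%N -> u m k = 0.
Proof.
elim: m k => [|m IH] [|k] //=.
by move=> h; rewrite !IH ?mulr0 ?subr0 //; lia.
Qed.

Lemma u_diag m : u m m = 1.
Proof. by elim: m => [|m IH] //=; rewrite IH u_gt // mulr0 subr0. Qed.

Lemma apply_u y (n : int) m : forall K w, (m <= K)%N ->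
  \sum_(k < K.+1) u m k * p q n y (q ^+ k * w) =
  ((q - 1) * w) ^+ m * q ^+ 'C(m, 2) * p q (n - m%:Z) y w.
Proof.
elim: m => [|m IH] K w hK.
  rewrite big_ord_recl big1 ?addr0; last first.
    by move=> k _; rewrite lift0 /= mulr0n mul0r.
  rewrite /= expr0 !mul1r; reflexivity.
case: K hK => [|K] hK //.
under eq_bigr => k _ do rewrite uS mulrBl.
rewrite sumrB.
under [X in _ - X = _]eq_bigr => k _ do rewrite -mulrA.
rewrite -big_distrr /= IH //; last by lia.
rewrite big_ord_recl mul0r add0r.
under eq_bigr => k _ do rewrite lift0 /= exprSr -mulrA.
rewrite IH; last by lia.
rewrite p_rec.
have -> : (n - m.+1%:Z = n - m%:Z - 1)%R by lia.
rewrite binS bin1 exprD !exprMn !exprS.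
ring.
Qed.

End Rec.
Lemma sum_rev (f : nat -> nat) N : (\sum_(j < N) f (N - j) = \sum_(j < N) f j.+1)%N.
Proof.
rewrite (reindex_inj rev_ord_inj) /=; apply: eq_bigr => j _.
have hj := ltn_ord j; congr f; lia.
Qed.

Lemma sum1 N : (\sum_(j < N) (N - j) = N * N.+1 %/ 2)%N.
Proof.
rewrite (sum_rev id).
suff -> : (N * N.+1 = (\sum_(j < N) j.+1) * 2)%N by rewrite mulnK.
elim: N => [|N IH]; first by rewrite big_ord0.
rewrite big_ord_recr /= mulnDl -IH; lia.
Qed.

Lemma C2 n : ('C(n, 2) * 2 = n * n.-1)%N.
Proof.
elim: n => [|n IH] //; rewrite binS bin1 mulnDl IH; case: n {IH} => //= n; lia.
Qed.

Lemma sum2 N : (\sum_(j < N) 'C(N - j, 2) = (N - 1) * N * N.+1 %/ 6)%N.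
Proof.
rewrite (sum_rev (fun m => 'C(m, 2))).
suff -> : ((N - 1) * N * N.+1 = (\sum_(j < N) 'C(j.+1, 2)) * 6)%N by rewrite mulnK.
elim: N => [|N IH]; first by rewrite big_ord0.
rewrite big_ord_recr /= mulnDl -IH.
have := C2 N.+1; simpl; case: N {IH} => [|N] /=; lia.
Qed.
Lemma p_neg q x y w : (0 < x)%N -> p q (0%:Z - x%:Z) y w = 0.
Proof. by case: x. Qed.

Theorem lemma5 (q : C) (hq0 : q != 0) (hq : not_root_of_unity q)
  (N : nat) (hN : (1 <= N)%N) (y z : C) (hz : z != 0) :
  phi q N y z =
    ((q - 1) * z) ^- (N * N.+1 %/ 2) * q ^- ((N - 1) * N * N.+1 %/ 6) *
    \det (\matrix_(i < N.+1, j < N.+1)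
            qp_nat q (2 * (N - i)) y (q ^+ (N - j) * z)).
Proof.
set S := \matrix_(i < N.+1, j < N.+1) _.
pose cc m := ((q - 1) * z) ^+ m * q ^+ 'C(m, 2).
pose U : 'M[C]_N.+1 := \matrix_(a < N.+1, j < N.+1) u q (N - j)%N (N - a)%N.
pose T : 'M[C]_N.+1 := \matrix_(i < N.+1, j < N.+1)
   (cc (N - j)%N * p q ((2 * (N - i))%N%:Z - (N - j)%N%:Z) y z).
have hST : S *m U = T.
  apply/matrixP => i j; rewrite !mxE.
  rewrite (reindex_inj rev_ord_inj) /=.
  transitivity (\sum_(k < N.+1) u q (N - j) k * p q (2 * (N - i))%N%:Z y (q ^+ k * z)).
    apply: eq_bigr => k _; rewrite !mxE /= subSS.
    have hk := ltn_ord k.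
    rewrite subKn // mulrC; reflexivity.
  rewrite apply_u //; lia.
have hU : \det U = 1.
  rewrite det_trig; last first.
    apply/is_trig_mxP => a j haj; rewrite mxE u_gt //.
    have := ltn_ord j; lia.
  by apply: big1 => a _; rewrite mxE u_diag.
pose Ph : 'M[C]_N := \matrix_(i < N, j < N) p q (N%:Z - 2 * (i : nat)%:Z + (j : nat)%:Z) y z.
have hT : \det T = phi q N y z * \prod_(j < N) cc (N - j)%N.
  rewrite (expand_det_row T ord_max) big_ord_recr /= big1 ?add0r; last first.
    move=> j _; rewrite mxE subnn muln0.
    rewrite p_neg ?mulr0 ?mul0r //=.
    have := ltn_ord j; lia.
  rewrite mxE /= subnn muln0 /cofactor /=.
  have -> : ((-1) ^+ (N + N) = 1 :> C).
    by rewrite -signr_odd addnn odd_double expr0.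
  have -> : row' ord_max (col' ord_max T) = Ph *m diag_mx (\row_(j < N) cc (N - j)%N).
    apply/matrixP => i j; rewrite mul_mx_diag !mxE !lift_max.
    rewrite mulrC; congr (_ * _); congr (p q _ y z).
    have hi : (@nat_of_ord N i < N)%N := ltn_ord i; have hj : (@nat_of_ord N j < N)%N := ltn_ord j; lia.
  rewrite det_mulmx det_diag qp_nat0 (eq_bigr (fun j : 'I_N => cc (N - j)%N)); last by move=> j _; rewrite mxE.
  rewrite /cc /= expr0 !mul1r; reflexivity.
have hS : \det S = \det T by rewrite -hST det_mulmx hU mulr1.
have hP : \prod_(j < N) cc (N - j)%N =
    ((q - 1) * z) ^+ (N * N.+1 %/ 2) * q ^+ ((N - 1) * N * N.+1 %/ 6).
  by rewrite /cc big_split /= !prodrXr sum1 sum2.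
rewrite hS hT hP.
have hq1 : q - 1 != 0 by rewrite subr_eq0; apply: (hq 1%N).
have hA : ((q - 1) * z) ^+ (N * N.+1 %/ 2) != 0 by rewrite expf_neq0 // mulf_neq0.
have hB : q ^+ ((N - 1) * N * N.+1 %/ 6) != 0 by rewrite expf_neq0.
move: hA hB.
set A := ((q - 1) * z) ^+ _; set B := q ^+ _ => hA hB.
field; by apply/andP.
Qed.
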